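(* Let $X$ be a finite uniconnected cycle set whose permutation group $\mathcal{G}(X)$ is a Dedekind group (every subgroup is normal). Then $X$ has finite multipermutation level.
   Context: A (non-degenerate) cycle set is a set $X$ with an operation such that each $\sigma_x:y\mapsto x\cdot y$ is bijective, $(x\cdot y)\cdot(x\cdot z)=(y\cdot x)\cdot(y\cdot z)$, and $x\mapsto x\cdot x$ is bijective. $\mathcal{G}(X)$ is the permutation group generated by $\{\sigma_x\mid x\in X\}$; $X$ is uniconnected if $\mathcal{G}(X)$ acts regularly on $X$. $\mathrm{Ret}(X)$ is the quotient of $X$ by $x\sim y\iff\sigma_x=\sigma_y$; $\mathrm{Ret}^0(X)=X$, $\mathrm{Ret}^i(X)=\mathrm{Ret}(\mathrm{Ret}^{i-1}(X))$; $X$ has finite multipermutation level if $|\mathrm{Ret}^n(X)|=1$ for some $n$. *)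

(* Defs.v *)
From HB Require Import structures.
From mathcomp Require Import all_boot all_order all_fingroup.
Set Implicit Arguments. Unset Strict Implicit. Unset Printing Implicit Defensive.

Record magma := Magma { carrier :> finType; mop : carrier -> carrier -> carrier }.

Definition sigmaf (M : magma) (x : M) : {ffun M -> M} := [ffun y => mop x y].

(* Ret(M): the set {sigma_x | x in M}, i.e. M modulo x ~ y <-> sigma_x = sigma_y *)
Definition RetT (M : magma) : finType := {f : {ffun M -> M} | f \in codom (@sigmaf M)}.

Definition ret_rep (M : magma) (a : RetT M) : M := iinv (valP a).

(* induced operation [x].[y] = [x.y]  (well defined for cycle sets) *)
Definition ret_op (M : magma) (a b : RetT M) : RetT M :=
  exist _ (sigmaf (mop (ret_rep a) (ret_rep b))) (codom_f _ _).

Definition Ret (M : magma) : magma := @Magma (RetT M) (@ret_op M).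

Fixpoint Ret_iter (n : nat) (M : magma) : magma :=
  match n with 0 => M | n'.+1 => Ret (Ret_iter n' M) end.

Definition is_cycle_set (X : finType) (op : X -> X -> X) : Prop :=
  [/\ forall x, bijective (op x),
      forall x y z, op (op x y) (op x z) = op (op y x) (op y z)
    & bijective (fun x => op x x)].

Definition sigma_set (X : finType) (op : X -> X -> X) : {set {perm X}} :=
  [set p : {perm X} | [exists x, [forall y, p y == op x y]]].

Definition permG (X : finType) (op : X -> X -> X) : {group {perm X}} :=
  <<sigma_set op>>%G.

(* G acts regularly on X: transitively with trivial point stabilisers *)
Definition uniconnected (X : finType) (op : X -> X -> X) : Prop :=
  [transitive permG op, on [set: X] | 'P] /\
  forall x : X, ('C_(permG op)[x | 'P])%g = 1%g.

Definition dedekind (gT : finGroupType) (G : {group gT}) : Prop :=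
  forall H : {group gT}, (H \subset G)%g -> (H <| G)%g.

Definition finite_mp_level (X : finType) (op : X -> X -> X) : Prop :=
  exists n, #|Ret_iter n (Magma op)| = 1%N.

(* Main.v *)
Require Import Defs.
From mathcomp Require Import all_boot all_order all_fingroup.
Set Implicit Arguments. Unset Strict Implicit. Unset Printing Implicit Defensive.
Local Open Scope group_scope.

Lemma surj_bij (T : finType) (f : T -> T) : (forall y, exists x, f x = y) -> bijective f.
Proof.
move=> sf; apply: injF_bij.
have H : #|image f T| == #|T|.
  rewrite eqn_leq leq_image_card /=; apply: subset_leq_card; apply/subsetP => y _.
  have [x <-] := sf y; exact: image_f.
move/image_injP: H => H x y; exact: H.
Qed.

Definition cls (M : magma) (x : M) : RetT M := exist _ (sigmaf x) (codom_f _ x).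

Lemma sig_rep (M : magma) (a : RetT M) : sigmaf (ret_rep a) = val a.
Proof. exact: f_iinv. Qed.

Lemma cls_rep (M : magma) (a : RetT M) : cls (ret_rep a) = a.
Proof. apply: val_inj; exact: sig_rep. Qed.

Lemma cls_eq (M : magma) (x y : M) : cls x = cls y <-> sigmaf x = sigmaf y.
Proof. by split => [/(congr1 val)//|h]; apply: val_inj. Qed.

Lemma sigmafP (M : magma) (x y : M) : sigmaf x = sigmaf y <-> mop x =1 mop y.
Proof.
split => [h z|h]; first by have := congr1 (fun f : {ffun M -> M} => f z) h; rewrite !ffunE.
by apply/ffunP => z; rewrite !ffunE.
Qed.

Lemma ret_opE (M : magma) (a b : RetT M) : ret_op a b = cls (mop (ret_rep a) (ret_rep b)).
Proof. by []. Qed.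

Lemma rep_cls (M : magma) (x : M) : mop (ret_rep (cls x)) =1 mop x.
Proof. by apply/sigmafP; rewrite sig_rep. Qed.

Lemma gen_cs (X : finType) (op : X -> X -> X) : is_cycle_set op ->
  forall x u v, op u =1 op v -> op (op x u) =1 op (op x v).
Proof.
case=> bij cyc _ x u v h w.
have [g K1 K2] := bij x.
rewrite -(K2 w) cyc h (h (g w)) -cyc //.
Qed.

Lemma L (X : finType) (op : X -> X -> X) : is_cycle_set op ->
  forall b : {perm X}, b \in permG op -> forall u v, op u =1 op v -> op (b u) =1 op (b v).
Proof.
move=> cs.
pose S := [set p : {perm X} | [forall u, forall v,
   [forall z, op u z == op v z] ==> [forall z, op (p u) z == op (p v) z]]].
have gS : group_set S.
  apply/group_setP; split.
    rewrite inE; apply/forallP=> u; apply/forallP=> v; apply/implyP => h.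
    by rewrite !perm1.
  move=> p q; rewrite !inE => /forallP hp /forallP hq.
  apply/forallP=> u; apply/forallP=> v; apply/implyP=> h; rewrite !permM.
  apply: (implyP (forallP (hq (p u)) (p v))).
  exact: (implyP (forallP (hp u) v)).
have sub : permG op \subset Group gS.
  rewrite /permG /= (gen_subG _ (Group gS)); apply/subsetP => p; rewrite !inE => /existsP [x /forallP px].
  apply/forallP=> u; apply/forallP=> v; apply/implyP=> /forallP h.
  apply/forallP => z; rewrite (eqP (px u)) (eqP (px v)).
  by apply/eqP; apply: gen_cs => // w; apply/eqP.
move=> b Hb u v h.
have := subsetP sub b Hb; rewrite inE => /forallP/(_ u)/forallP/(_ v)/implyP.
move=> H; have /H/forallP H2 : [forall z, op u z == op v z] by apply/forallP => z; rewrite h.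
by move=> z; apply/eqP.
Qed.

Lemma Linv (X : finType) (op : X -> X -> X) : is_cycle_set op ->
  forall b : {perm X}, b \in permG op -> forall u v, op (b u) =1 op (b v) -> op u =1 op v.
Proof.
move=> cs b Hb u v h.
have := L cs (groupVr Hb) h; by rewrite !permK.
Qed.

Lemma op_inj (X : finType) (op : X -> X -> X) : is_cycle_set op -> forall x, injective (op x).
Proof. by case=> bij _ _ x; exact: (bij_inj (bij x)). Qed.

Definition sp (X : finType) (op : X -> X -> X) (cs : is_cycle_set op) (x : X) : {perm X} :=
  perm (@op_inj _ _ cs x).

Lemma sp_in (X : finType) (op : X -> X -> X) (cs : is_cycle_set op) x : sp cs x \in permG op.
Proof.
apply: mem_gen; rewrite inE; apply/existsP; exists x; apply/forallP => y.
by rewrite permE.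
Qed.

Lemma cls_op (M : magma) : is_cycle_set (@mop M) ->
  forall x y : M, ret_op (cls x) (cls y) = cls (mop x y).
Proof.
move=> cs x y; rewrite ret_opE; apply/cls_eq/sigmafP.
rewrite (rep_cls x).
have := L cs (sp_in cs x) (rep_cls y).
by rewrite !permE.
Qed.

Lemma Ret_cs (M : magma) : is_cycle_set (@mop M) -> is_cycle_set (@ret_op M).
Proof.
move=> cs; split.
- move=> a; apply: injF_bij => b c.
  rewrite -(cls_rep a) -(cls_rep b) -(cls_rep c) !cls_op // => /cls_eq/sigmafP h.
  apply/cls_eq/sigmafP; apply: (Linv cs (sp_in cs (ret_rep a))).
  by rewrite !permE.
- move=> a b c.
  rewrite -(cls_rep a) -(cls_rep b) -(cls_rep c) !cls_op //.
  by case: cs => _ cyc _; rewrite cyc.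
- apply: surj_bij => b.
  case: (cs) => _ _ [g K1 K2].
  exists (cls (g (ret_rep b))); rewrite cls_op // (K2 (ret_rep b)); exact: cls_rep.
Qed.

Definition tof (M : magma) (p : {perm M}) (a : RetT M) : RetT M :=
  if p \in permG (@mop M) then cls (p (ret_rep a)) else a.

Lemma tof_inj (M : magma) (cs : is_cycle_set (@mop M)) (p : {perm M}) : injective (tof p).
Proof.
move=> a b; rewrite /tof; case: ifP => Hp; last by [].
move/cls_eq/sigmafP/(Linv cs Hp)/sigmafP; rewrite !sig_rep; exact: val_inj.
Qed.

Definition phi (M : magma) (cs : is_cycle_set (@mop M)) (p : {perm M}) : {perm RetT M} :=
  perm (@tof_inj M cs p).

Lemma phiM (M : magma) (cs : is_cycle_set (@mop M)) :
  {in permG (@mop M) &, {morph phi cs : x y / x * y}}.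
Proof.
move=> a b Ha Hb; apply/permP => c; rewrite permM !permE /tof groupM // Ha Hb permM.
apply/cls_eq/sigmafP; apply: (L cs Hb) => z.
by rewrite (rep_cls (a (ret_rep c))).
Qed.

Definition phim (M : magma) (cs : is_cycle_set (@mop M)) :
  {morphism permG (@mop M) >-> {perm RetT M}} := Morphism (phiM cs).

Lemma phi_gen (M : magma) (cs : is_cycle_set (@mop M)) :
  phim cs @* permG (@mop M) = (permG (@ret_op M) : {set _}).
Proof.
rewrite /permG /= morphim_gen ?subset_gen //; congr <<_>>.
rewrite morphimEsub ?subset_gen //.
apply/setP => p; apply/imsetP/idP.
- case=> q; rewrite inE => /existsP [x /forallP qx] ->.
  rewrite inE; apply/existsP; exists (cls x); apply/forallP => b.
  rewrite /= permE /tof (mem_gen (A:=sigma_set (@mop M))); last first.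
    by rewrite inE; apply/existsP; exists x; apply/forallP.
  rewrite (eqP (qx _)) ret_opE; apply/eqP/cls_eq/sigmafP => z.
  by rewrite (rep_cls x).
- rewrite inE => /existsP [a /forallP pa].
  exists (sp cs (ret_rep a)).
    by rewrite inE; apply/existsP; exists (ret_rep a); apply/forallP => y; rewrite permE.
  apply/permP => b; rewrite (eqP (pa b)) /= permE /tof sp_in permE.
  by rewrite ret_opE.
Qed.

Lemma ded_morphim (aT rT : finGroupType) (G : {group aT}) (f : {morphism G >-> rT}) :
  dedekind G -> forall H : {group rT}, H \subset f @* G -> H <| f @* G.
Proof.
move=> dG H sH; rewrite -(morphpreK sH); apply: morphim_normal; apply: dG.
exact: subsetIl.
Qed.

Lemma Ret_ded (M : magma) : is_cycle_set (@mop M) -> dedekind (permG (@mop M)) ->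
  dedekind (permG (@ret_op M)).
Proof.
move=> cs dG H; rewrite -(phi_gen cs); exact: ded_morphim.
Qed.

Lemma Ret_trans (M : magma) : is_cycle_set (@mop M) ->
  [transitive permG (@mop M), on [set: M] | 'P] ->
  [transitive permG (@ret_op M), on [set: RetT M] | 'P].
Proof.
move=> cs tr.
have [x0 _ _] := imsetP tr.
apply/imsetP; exists (cls x0) => //.
apply/eqP; rewrite eqEsubset subsetT andbT; apply/subsetP => b _.
have [g Hg Eg] := atransP2 tr (in_setT x0) (in_setT (ret_rep b)).
apply/imsetP; exists (phi cs g).
  rewrite -(phi_gen cs); apply/morphimP; exists g => //.
have Eg2 : ret_rep b = g x0 by exact: Eg.
change (b = phi cs g (cls x0)); rewrite permE /tof Hg -[LHS]cls_rep Eg2; apply/cls_eq/sigmafP => z; by rewrite (L cs Hg (rep_cls x0) z).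
Qed.

Lemma stab_triv (T : finType) (G : {group {perm T}}) :
  [transitive G, on [set: T] | 'P] -> dedekind G -> forall x, 'C_G[x | 'P] = 1.
Proof.
move=> tr dG x; apply/trivgP/subsetP => s /setIP [sG /astab1P sx].
rewrite inE; apply/eqP/permP => y; rewrite perm1.
have [g gG Eg] := atransP2 tr (in_setT x) (in_setT y).
have Ey : y = g x by exact: Eg.
have nS := normal_norm (dG _ (subsetIl G 'C[x | 'P])).
have : s ^ g^-1 \in 'C_G[x | 'P].
  rewrite memJ_norm; last exact: (subsetP nS _ (groupVr gG)).
  by rewrite inE sG; apply/astab1P.
case/setIP => _ /astab1P => h0.
have h : g^-1 (s (g x)) = x.
  by have := h0; rewrite /= /aperm conjgE invgK !permM.
by rewrite Ey -{2}h permKV.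
Qed.

Lemma card_reg (T : finType) (G : {group {perm T}}) :
  [transitive G, on [set: T] | 'P] -> dedekind G -> #|G| = #|T|.
Proof.
move=> tr dG; have [x _ _] := imsetP tr.
rewrite -(card_orbit_stab 'P G x) (atransP tr _ (in_setT x)) stab_triv // cards1 muln1.
exact: cardsT.
Qed.

Lemma ret_lt (M : magma) : is_cycle_set (@mop M) ->
  [transitive permG (@mop M), on [set: M] | 'P] -> dedekind (permG (@mop M)) ->
  1 < #|M| -> #|Ret M| < #|M|.
Proof.
move=> cs tr dG gt1.
have cardG := card_reg tr dG.
have le : #|Ret M| <= #|M|.
  rewrite /= card_sig; exact: leq_image_card.
rewrite ltn_neqAle le andbT; apply/negP => /eqP E.
have inj : injective (@sigmaf M).
  have E2 : #|image (@sigmaf M) M| == #|M| by move: E; rewrite /= card_sig => ->.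
  move/image_injP: E2 => E2 x y; exact: E2.
have spinj : injective (sp cs).
  move=> x y h; apply: inj; apply/sigmafP => z.
  by have := congr1 (fun p : {perm M} => p z) h; rewrite !permE.
have AG : [set sp cs x | x : M] = permG (@mop M).
  apply/eqP; rewrite eqEcard; apply/andP; split.
    by apply/subsetP => p /imsetP [x _ ->]; exact: sp_in.
  by rewrite cardG card_imset // cardT.
have : (1 : {perm M}) \in [set sp cs x | x : M] by rewrite AG group1.
case/imsetP => a _ Ea.
have opa : forall y, mop a y = y.
  by move=> y; have := congr1 (fun p : {perm M} => p y) Ea; rewrite perm1 permE.
have fixa : forall y, mop y a = a.
  move=> y; apply: inj; apply/sigmafP => w.
  case: (cs) => bij cyc _; have [g K1 K2] := bij y.
  by rewrite -(K2 w) cyc !opa.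
have sub : permG (@mop M) \subset 'C_(permG (@mop M))[a | 'P].
  rewrite subsetI subxx /= /permG /= (gen_subG _ ('C[a | 'P])%G).
  apply/subsetP => p; rewrite inE => /existsP [x /forallP px]; apply/astab1P.
  by change (p a = a); rewrite (eqP (px a)) fixa.
rewrite stab_triv // in sub.
have := subset_leq_card sub; rewrite cards1 cardG => h1.
by move: (leq_trans gt1 h1).
Qed.

Lemma Ret_iterS n (M : magma) : Ret_iter n.+1 M = Ret_iter n (Ret M).
Proof. by elim: n => //= n IH; rewrite -IH. Qed.

Lemma main_ind n : forall M : magma, #|M| <= n -> is_cycle_set (@mop M) ->
  [transitive permG (@mop M), on [set: M] | 'P] -> dedekind (permG (@mop M)) ->
  exists k, #|Ret_iter k M| = 1%N.
Proof.
elim: n => [|n IH] M le cs tr dG.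
  have [x _ _] := imsetP tr.
  have : 0 < #|M| by apply/card_gt0P; exists x.
  by rewrite ltnNge le.
case: (ltnP 1 #|M|) => h.
  have lt := ret_lt cs tr dG h.
  have le2 : #|Ret M| <= n by rewrite -ltnS; exact: leq_trans lt le.
  have [k Hk] := IH (Ret M) le2
     (Ret_cs cs) (Ret_trans cs tr) (Ret_ded cs dG).
  by exists k.+1; rewrite Ret_iterS.
exists 0; apply/eqP; rewrite eqn_leq h /=.
have [x _ _] := imsetP tr.
by apply/card_gt0P; exists x.
Qed.

Local Close Scope group_scope.

Theorem mainTheorem7 (X : finType) (op : X -> X -> X) :
  is_cycle_set op -> uniconnected op -> dedekind (permG op) ->
  finite_mp_level op.
Proof.
move=> cs [tr _] dG.
have [k Hk] := @main_ind #|X| (@Defs.Magma X op) (leqnn _) cs tr dG.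
by exists k.
Qed.
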